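(* Let $q,d,m\ge 1$ be integers and $\varepsilon\in[0,1)$. For $j=1,\ldots,m$ let $S_j=\{s_{j,1},s_{j,2},\ldots,s_{j,d}\}\subseteq\mathbb{Z}_q$ be $\varepsilon$-biased sets of size $d$ with $s_{j,1}=0$. Let $\{\ket{\ell_1},\ldots,\ket{\ell_d}\}$ be an orthonormal basis of $\mathbb{C}^d$. For $x\in\mathbb{Z}_q=\{0,1,\ldots,q-1\}$ define \[ \ket{\psi_j(x)}=\frac{1}{\sqrt d}\Big(\ket{\ell_1}+e^{i2\pi s_{j,2}x/q}\ket{\ell_2}+\cdots+e^{i2\pi s_{j,d}x/q}\ket{\ell_d}\Big),\qquad \ket{\psi(x)}=\ket{\psi_1(x)}\otimes\cdots\otimes\ket{\psi_m(x)}\in(\mathbb{C}^d)^{\otimes m}. \] Then the map $\psi:\mathbb{Z}_q\to(\mathbb{C}^{d})^{\otimes m}\cong\mathcal{H}^{d^m}$ is a quantum $\left(\frac{d^m}{q},\varepsilon^m\right)$-resistant hash function; that is, $\frac{d^m}{q}\le\frac{d^m}{q}$ (the state space dimension $d^m$ divided by the input set size $q$) and for all $x_1\neq x_2$ in $\mathbb{Z}_q$, $\left|\braket{\psi(x_1)}{\psi(x_2)}\right|\le\varepsilon^m$.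
   Context: For $S=\{s_1,\ldots,s_d\}\subseteq\mathbb{Z}_q$ and $x\in\mathbb{Z}_q$, $\mathrm{bias}(S,x)=\frac{1}{|S|}\left|\sum_{s\in S}e^{2\pi i s x/q}\right|$; $S$ is $\varepsilon$-biased if $\mathrm{bias}(S,x)\le\varepsilon$ for all $x\ne 0$. Definition: for $\delta\in(0,1]$ and $\varepsilon\in[0,1)$, a function $\psi:\mathbb{X}\to\mathcal{H}^K$ (where $\mathcal{H}^K$ is a $K$-dimensional Hilbert space and $\mathbb{X}$ a finite set) is a quantum $(\delta,\varepsilon)$-resistant hash function if (i) ($\delta$-one-wayness) $K/|\mathbb{X}|\le\delta$, and (ii) ($\varepsilon$-collision-resistance) $|\braket{\psi(x_1)}{\psi(x_2)}|\le\varepsilon$ for every pair of distinct $x_1,x_2\in\mathbb{X}$. *)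

(* Defs.v *)
From HB Require Import structures.
From mathcomp Require Import all_boot all_order all_algebra.
From mathcomp Require Import reals trigo.
From mathcomp Require Import complex.
Set Implicit Arguments. Unset Strict Implicit. Unset Printing Implicit Defensive.
Import Order.TTheory GRing.Theory Num.Theory.
Local Open Scope ring_scope.
Local Open Scope complex_scope.

Section QHash.
Variable R : realType.
Local Notation C := R[i].

Definition expi (theta : R) : C := (cos theta) +i* (sin theta).

Definition chi (q s x : nat) : C := expi (2 * pi * (s * x)%:R / q%:R).

Definition bias (q : nat) (S : {set 'I_q}) (x : 'I_q) : C :=
  (#|S|%:R)^-1 * `| \sum_(s in S) chi q s x |.

Definition eps_biased (q : nat) (S : {set 'I_q}) (eps : R) : Prop :=
  forall x : 'I_q, x != 0%N :> nat -> bias S x <= eps%:C.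

(* vectors of a finite-dimensional Hilbert space with orthonormal coordinate
   basis indexed by the finite type I (dimension #|I|) *)
Definition inner (I : finType) (u v : I -> C) : C := \sum_(i : I) (u i)^* * v i.

Definition orthonormal_basis (d : nat) (l : 'I_d -> 'I_d -> C) : Prop :=
  forall a b : 'I_d, inner (l a) (l b) = (a == b)%:R.

(* tensor product v_1 (x) ... (x) v_m of vectors of C^d, as a vector of
   (C^d)^{(x) m} with coordinates indexed by {ffun 'I_m -> 'I_d} *)
Definition tens (m d : nat) (v : 'I_m -> 'I_d -> C) : {ffun 'I_m -> 'I_d} -> C :=
  fun k => \prod_(j < m) v j (k j).

Definition qresistant_hash (X I : finType) (psi : X -> I -> C) (delta eps : R)
  : Prop :=
  (#|I|%:R / #|X|%:R <= delta) /\
  (forall x1 x2 : X, x1 != x2 -> `| inner (psi x1) (psi x2) | <= eps%:C).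

End QHash.

(* Main.v *)
Require Import Defs.
From HB Require Import structures.
From mathcomp Require Import all_boot all_order all_algebra.
From mathcomp Require Import reals trigo.
From mathcomp Require Import complex.
From mathcomp Require Import zify ring lra.
Import Order.TTheory GRing.Theory Num.Theory.
Local Open Scope ring_scope.
Local Open Scope complex_scope.

Section H.
Variable R : realType.
Local Notation C := R[i].

Lemma expiD (a b : R) : expi (a + b) = expi a * expi b.
Proof. rewrite /expi cosD sinD [RHS]/GRing.mul /=; congr Complex; ring. Qed.

Lemma expiJK (a : R) : (expi a)^* * expi a = 1.
Proof.
rewrite /expi /= [LHS]/GRing.mul /=.
apply/eqP; rewrite eq_complex /=; apply/andP; split; apply/eqP.
  rewrite -(cos2Dsin2 a); ring.
ring.
Qed.

Lemma expi_period (a : R) (n : nat) : expi (a + 2 * pi * n%:R) = expi a.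
Proof.
elim: n => [|n IH]; first by rewrite mulr0 addr0.
have -> : a + 2 * pi * n.+1%:R = (a + 2 * pi * n%:R) + pi *+ 2.
  by rewrite -natr1 mulr2n; ring.
by rewrite /expi cosD2pi sinD2pi -/(expi _) IH.
Qed.

Lemma chi_diff (q s x1 x2 : nat) : (0 < q)%N -> (x1 < q)%N ->
  (chi R q s x1)^* * chi R q s x2 = chi R q s ((x2 + q - x1) %% q).
Proof.
move=> hq hx1.
set x := ((x2 + q - x1) %% q)%N.
set k := ((x2 + q - x1) %/ q)%N.
have E : (s * x2 + s * q = s * x1 + s * x + (s * k) * q)%N.
  have := divn_eq (x2 + q - x1) q; rewrite -/x -/k; nia.
have qn0 : (q%:R : R) != 0 by rewrite pnatr_eq0 -lt0n.
have hb : forall N M : nat, 2 * pi * (N + M * q)%:R / q%:R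
   = 2 * pi * N%:R / q%:R + 2 * pi * M%:R :> R.
  by move=> N M; rewrite natrD natrM; field.
have e2 : chi R q s x2 = chi R q s x1 * chi R q s x.
  rewrite /chi -expiD.
  rewrite -(expi_period (2 * pi * (s * x2)%:R / q%:R) s) -[_ + _ * s%:R]hb.
  rewrite E hb expi_period.
  by congr expi; rewrite natrD; field.
by rewrite e2 mulrA expiJK mul1r.
Qed.

Lemma inner_tens (m d : nat) (u v : 'I_m -> 'I_d -> C) :
  inner (tens u) (tens v) = \prod_(j < m) inner (u j) (v j).
Proof.
rewrite /inner /tens.
under eq_bigr => k _ do rewrite rmorph_prod -big_split /=.
by rewrite bigA_distr_bigA.
Qed.

Lemma inner_comb (d : nat) (l : 'I_d -> 'I_d -> C) (a b : 'I_d -> C) :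
  orthonormal_basis l ->
  inner (fun t => \sum_(k < d) a k * l k t) (fun t => \sum_(k < d) b k * l k t)
  = \sum_(k < d) (a k)^* * b k.
Proof.
move=> hl; rewrite /inner.
under eq_bigr => t _ do rewrite rmorph_sum big_distrl /=.
rewrite exchange_big; apply: eq_bigr => k _.
under eq_bigr => t _ do rewrite big_distrr /=.
rewrite exchange_big /= (bigD1 k) //= [X in _ + X]big1 ?addr0.
  have := hl k k; rewrite eqxx /inner => H.
  under eq_bigr => t _ do rewrite rmorphM mulrACA.
  by rewrite -mulr_sumr H mulr1.
move=> k' hk'.
have := hl k k'; rewrite eq_sym (negbTE hk') /inner => H.
under eq_bigr => t _ do rewrite rmorphM mulrACA.
by rewrite -mulr_sumr H mulr0.
Qed.
Lemma cJ (r : R) (z : R[i]) : 0 <= r -> ((r%:C * z)^*)%R = r%:C * (z^*)%R.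
Proof. move=> hr. rewrite rmorphM /=. rewrite geC0_conj // ler0c //. Qed.
End H.

Theorem theorem1 (R : realType) (q d m : nat) (eps : R)
  (hq : (1 <= q)%N) (hd : (1 <= d)%N) (hm : (1 <= m)%N)
  (heps0 : 0 <= eps) (heps1 : eps < 1)
  (s : 'I_m -> 'I_d -> 'I_q)
  (hsize : forall j : 'I_m, #|[set s j k | k : 'I_d]| = d)
  (hbias : forall j : 'I_m, eps_biased [set s j k | k : 'I_d] eps)
  (hs0 : forall (j : 'I_m) (k : 'I_d), k = 0%N :> nat -> s j k = 0%N :> nat)
  (l : 'I_d -> 'I_d -> R[i]) (hl : orthonormal_basis l) :
  let psi_j := fun (j : 'I_m) (x : 'I_q) (t : 'I_d) =>
    \sum_(k < d) ((Num.sqrt (d%:R : R))^-1)%:C * chi R q (s j k) x * l k t in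
  let psi := fun x : 'I_q => tens (fun j => psi_j j x) in
  qresistant_hash psi ((d ^ m)%:R / q%:R) (eps ^+ m).
Proof.
move=> psi_j psi; split.
  by rewrite card_ffun !card_ord.
move=> x1 x2 hne.
rewrite /psi inner_tens normr_prod.
have -> : (eps ^+ m)%:C = \prod_(j < m) eps%:C :> R[i].
  by rewrite prodr_const card_ord rmorphXn.
apply: ler_prod => j _; rewrite normr_ge0 /=.
set c := ((Num.sqrt (d%:R : R))^-1)%:C.
rewrite /psi_j inner_comb //.
have hx : ((x2 + q - x1) %% q < q)%N by rewrite ltn_pmod.
set x := Ordinal hx.
have hx0 : x != 0%N :> nat.
  rewrite /x /=; apply/eqP => h.
  have hneq : (x1 : nat) <> (x2 : nat) by move=> e; move/eqP: hne; apply; apply: val_inj.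
  have := divn_eq (x2 + q - x1) q; rewrite h addn0.
  have := ltn_ord x1; have := ltn_ord x2; move: hneq.
  case: ((x2 + q - x1) %/ q)%N => [|[|k]]; nia.
have HB := hbias j x hx0; rewrite /bias hsize in HB.
have cJ' : forall z, ((c * z)^*)%R = c * (z^*)%R.
  by move=> z; rewrite /c cJ // invr_ge0 sqrtr_ge0.
rewrite -/c.
under eq_bigr => k _ do rewrite cJ' mulrACA chi_diff //.
rewrite -mulr_sumr.
have -> : c * c = (d%:R)^-1.
  rewrite /c -rmorphM -expr2 exprVn sqr_sqrtr ?ler0n //.
  by rewrite fmorphV rmorph_nat.
have inj : {in [pred k : 'I_d | true] &, injective (s j)}.
  apply/imset_injP; by rewrite hsize card_ord.
rewrite big_imset //= in HB.
rewrite normrM ger0_norm ?invr_ge0 ?ler0n //.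
Qed.
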